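(* Let $X$ be a Polish space and $2\le\xi<\omega_1$. (1) If there is a monotone $\Sigma^0_\xi$ hull operation on $\mathcal{M}$ with respect to $\mathcal{M}$, then there is a monotone $\Pi^0_{\xi+1}$ hull operation on $\mathtt{Baire}$ with respect to $\mathcal{M}$. (2) If there is a monotone $\Pi^0_\xi$ hull operation on $\mathcal{M}$ with respect to $\mathcal{M}$, then there is a monotone $\Pi^0_\xi$ hull operation on $\mathtt{Baire}$ with respect to $\mathcal{M}$.
   Context: $\mathcal{M}$ is the $\sigma$-ideal of meager subsets of $X$, and $\mathtt{Baire}$ is the $\sigma$-algebra of subsets of $X$ with the Baire property. A Borel hull operation on a family $\mathcal{F}$ with respect to $\mathcal{M}$ is a map $\psi$ from $\mathcal{F}$ to the Borel sets with $A\subseteq\psi(A)$ and $\psi(A)\setminus A\in\mathcal{M}$ for every $A\in\mathcal{F}$. It is monotone if $A_1\subseteq A_2$ in $\mathcal{F}$ implies $\psi(A_1)\subseteq\psi(A_2)$. It is a $\mathcal{K}$ hull operation, for a Borel class $\mathcal{K}$ such as $\Sigma^0_\xi$ or $\Pi^0_\xi$, if all its values belong to $\mathcal{K}$. *)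

(* Defs.v *)
From Stdlib Require Import Reals.
Open Scope R_scope.
Set Implicit Arguments.

Definition is_metric (X : Type) (d : X -> X -> R) : Prop :=
  (forall x y, 0 <= d x y) /\
  (forall x y, d x y = 0 <-> x = y) /\
  (forall x y, d x y = d y x) /\
  (forall x y z, d x z <= d x y + d y z).

Definition metric_open (X : Type) (d : X -> X -> R) (U : X -> Prop) : Prop :=
  forall x, U x -> exists r, 0 < r /\ forall y, d x y < r -> U y.

Definition metric_complete (X : Type) (d : X -> X -> R) : Prop :=
  forall u : nat -> X,
    (forall eps, 0 < eps -> exists N, forall m n, (N <= m)%nat -> (N <= n)%nat ->
        d (u m) (u n) < eps) ->
    exists l, forall eps, 0 < eps -> exists N, forall n, (N <= n)%nat -> d (u n) l < eps.

(** countable subset: enumerated (possibly with gaps) by nat *)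
Definition countable_set (X : Type) (S : X -> Prop) : Prop :=
  exists g : nat -> option X, forall x, S x -> exists n, g n = Some x.

Definition metric_separable (X : Type) (d : X -> X -> R) : Prop :=
  exists S : X -> Prop, countable_set S /\
    forall x eps, 0 < eps -> exists y, S y /\ d x y < eps.

Definition polish (X : Type) (opn : (X -> Prop) -> Prop) : Prop :=
  exists d : X -> X -> R,
    is_metric d /\ metric_complete d /\ metric_separable d /\
    forall U, opn U <-> metric_open d U.

Section Top.
Variable X : Type.
Variable opn : (X -> Prop) -> Prop.

Definition compl (A : X -> Prop) : X -> Prop := fun x => ~ A x.

Definition closure (A : X -> Prop) : X -> Prop :=
  fun x => forall U, opn U -> U x -> exists y, U y /\ A y.

Definition nowhere_dense (A : X -> Prop) : Prop :=
  forall U, opn U -> (forall x, U x -> closure A x) -> forall x, ~ U x.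

Definition meager (A : X -> Prop) : Prop :=
  exists F : nat -> (X -> Prop),
    (forall n, nowhere_dense (F n)) /\ (forall x, A x -> exists n, F n x).

Definition baire_prop (A : X -> Prop) : Prop :=
  exists U, opn U /\ meager (fun x => (A x /\ ~ U x) \/ (U x /\ ~ A x)).

Inductive borel : (X -> Prop) -> Prop :=
| borel_open : forall U, opn U -> borel U
| borel_compl : forall A, borel A -> borel (compl A)
| borel_union : forall F : nat -> (X -> Prop), (forall n, borel (F n)) ->
    borel (fun x => exists n, F n x)
| borel_ext : forall A B, borel A -> (forall x, A x <-> B x) -> borel B.

End Top.

(** * Countable ordinals as (well-formed) Brouwer ordinals *)

Inductive Ord : Type :=
| OZ : Ord
| OS : Ord -> Ord
| OL : (nat -> Ord) -> Ord.

(** strict structural subterm relation (implies strict ordinal order) *)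
Inductive osub : Ord -> Ord -> Prop :=
| osub_S : forall a, osub a (OS a)
| osub_L : forall (f : nat -> Ord) n, osub (f n) (OL f)
| osub_trans : forall a b c, osub a b -> osub b c -> osub a c.

(** well-formed: limits are taken only of strictly increasing sequences,
    so OL f denotes a genuine limit ordinal (the sup of the f n).
    Every countable ordinal is denoted by some well-formed term. *)
Inductive ord_wf : Ord -> Prop :=
| wf_Z : ord_wf OZ
| wf_S : forall a, ord_wf a -> ord_wf (OS a)
| wf_L : forall f : nat -> Ord, (forall n, ord_wf (f n)) ->
    (forall n, osub (f n) (f (S n))) -> ord_wf (OL f).

(** For a term a denoting the ordinal alpha,
    [Sigma0 opn a] is the class Sigma^0_{1+alpha} and [Pi0 opn a] is
    Pi^0_{1+alpha}.  So Sigma0 opn OZ = open sets, Sigma0 opn (OS OZ) = F_sigma,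
    and Sigma^0_xi for 2 <= xi < omega_1 is Sigma0 opn a with a <> OZ. *)
Section Hier.
Variable X : Type.
Variable opn : (X -> Prop) -> Prop.

Definition cunion (P : (X -> Prop) -> Prop) (A : X -> Prop) : Prop :=
  exists F : nat -> (X -> Prop),
    (forall x, A x <-> exists n, F n x) /\ forall n, P (F n).

(** Sigma^0_{1+a}, given the family [below] of all Pi^0_{1+b}, b < a *)
Definition sigma_step (a : Ord) (below : (X -> Prop) -> Prop) (A : X -> Prop) : Prop :=
  match a with
  | OZ => opn A
  | _ => cunion below A
  end.

(** PiBelow a B <-> B is in Pi^0_{1+b} for some b < a *)
Fixpoint PiBelow (a : Ord) : (X -> Prop) -> Prop :=
  match a with
  | OZ => fun _ => False
  | OS b => fun B => PiBelow b B \/ sigma_step b (PiBelow b) (compl B)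
  | OL f => fun B => exists n, PiBelow (f n) B
  end.

Definition Sigma0 (a : Ord) (A : X -> Prop) : Prop := sigma_step a (PiBelow a) A.
Definition Pi0 (a : Ord) (A : X -> Prop) : Prop := Sigma0 a (compl A).

Definition monotone_hull (F K : (X -> Prop) -> Prop) (psi : (X -> Prop) -> (X -> Prop)) : Prop :=
  (forall A, F A ->
     borel opn (psi A) /\ K (psi A) /\
     (forall x, A x -> psi A x) /\
     meager opn (fun x => psi A x /\ ~ A x)) /\
  (forall A1 A2, F A1 -> F A2 -> (forall x, A1 x -> A2 x) ->
     forall x, psi A1 x -> psi A2 x).

End Hier.

(* Main.v *)
Require Import Defs.
From Stdlib Require Import Reals Lra Lia Classical IndefiniteDescription Cantor.
Open Scope R_scope.
Set Implicit Arguments.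

Definition pr (n:nat) : nat*nat := Cantor.of_nat n.
Lemma pr_surj : forall i k, exists n, pr n = (i,k).
Proof. intros i k. exists (Cantor.to_nat (i,k)). apply Cantor.cancel_of_to. Qed.

Lemma cunion_ext (X:Type) (P : (X->Prop)->Prop) (A B : X -> Prop) :
  cunion P A -> (forall x, A x <-> B x) -> cunion P B.
Proof.
  intros [F [HF HP]] HAB. exists F. split; auto.
  intro x. rewrite <- HAB. apply HF.
Qed.

Lemma cunion_flat (X:Type) (P : (X->Prop)->Prop) (A : X -> Prop) (F : nat -> X -> Prop) :
  (forall x, A x <-> exists n, F n x) -> (forall n, cunion P (F n)) -> cunion P A.
Proof.
  intros HA HF. unfold cunion in HF.
  destruct (functional_choice (fun n G => (forall x, F n x <-> exists k, G k x) /\ forall k, P (G k)) HF) as [G HG].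
  exists (fun m => G (fst (pr m)) (snd (pr m))). split.
  - intro x. rewrite HA. split.
    + intros [n Hn]. apply (proj1 (HG n) x) in Hn. destruct Hn as [k Hk].
      destruct (pr_surj n k) as [m Hm]. exists m. rewrite Hm. simpl. exact Hk.
    + intros [m Hm]. exists (fst (pr m)). apply (proj1 (HG _) x). exists (snd (pr m)). exact Hm.
  - intro m. apply (proj2 (HG _)).
Qed.

Lemma cunion_or (X:Type) (P : (X->Prop)->Prop) (A B : X -> Prop) :
  cunion P A -> cunion P B -> cunion P (fun x => A x \/ B x).
Proof.
  intros HA HB.
  apply (@cunion_flat X P _ (fun n => match n with O => A | S _ => B end)).
  - intro x; split.
    + intros [H|H]; [exists O | exists 1%nat]; exact H.
    + intros [[|n] H]; [left|right]; exact H.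
  - intros [|n]; assumption.
Qed.

Lemma meager_sub (X:Type) opn (A B : X -> Prop) :
  meager opn B -> (forall x, A x -> B x) -> meager opn A.
Proof. intros [F [HF HB]] HAB. exists F. split; auto. Qed.

Lemma meager_cunion (X:Type) opn (A : X -> Prop) (M : nat -> X -> Prop) :
  (forall n, meager opn (M n)) -> (forall x, A x -> exists n, M n x) -> meager opn A.
Proof.
  intros HM HA. unfold meager in HM.
  destruct (functional_choice (fun n G => (forall k, nowhere_dense opn (G k)) /\ forall x, M n x -> exists k, G k x) HM) as [G HG].
  exists (fun m => G (fst (pr m)) (snd (pr m))). split.
  - intro m. apply (proj1 (HG _)).
  - intros x Hx. destruct (HA x Hx) as [n Hn]. destruct (proj2 (HG n) x Hn) as [k Hk].
    destruct (pr_surj n k) as [m Hm]. exists m. rewrite Hm. exact Hk.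
Qed.

Lemma mo_ext (X:Type) (d : X -> X -> R) (A B : X -> Prop) :
  metric_open d A -> (forall x, A x <-> B x) -> metric_open d B.
Proof.
  intros H E x Bx. apply E in Bx. destruct (H x Bx) as [r [r0 Hr]].
  exists r; split; auto. intros y Hy. apply E; auto.
Qed.

Lemma mo_or (X:Type) (d : X -> X -> R) (A B : X -> Prop) :
  metric_open d A -> metric_open d B -> metric_open d (fun x => A x \/ B x).
Proof.
  intros HA HB x [Hx|Hx].
  - destruct (HA x Hx) as [r [r0 Hr]]. exists r; split; auto.
  - destruct (HB x Hx) as [r [r0 Hr]]. exists r; split; auto.
Qed.

Lemma mo_and (X:Type) (d : X -> X -> R) (A B : X -> Prop) :
  metric_open d A -> metric_open d B -> metric_open d (fun x => A x /\ B x).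
Proof.
  intros HA HB x [Hx1 Hx2].
  destruct (HA x Hx1) as [r1 [r1p H1]]. destruct (HB x Hx2) as [r2 [r2p H2]].
  exists (Rmin r1 r2). split. apply Rmin_pos; auto.
  intros y Hy. split.
  - apply H1. apply Rlt_le_trans with (1 := Hy). apply Rmin_l.
  - apply H2. apply Rlt_le_trans with (1 := Hy). apply Rmin_r.
Qed.

Lemma mo_True (X:Type) (d : X -> X -> R) : metric_open d (fun _ : X => True).
Proof. intros x _. exists 1; split; [lra|auto]. Qed.

Lemma ball_closed (X:Type) (d : X -> X -> R) (Hd : is_metric d) (o : option X) (r : R) :
  metric_open d (compl (fun y => exists q, o = Some q /\ d q y <= r)).
Proof.
  destruct Hd as [H0 [H1 [H2 H3]]].
  intros x Hx. destruct o as [q|].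
  - assert (Hq : r < d q x).
    { apply Rnot_le_lt. intro H. apply Hx. exists q; auto. }
    exists (d q x - r). split; [lra|].
    intros y Hy [q' [Hq' Hy']]. injection Hq' as <-.
    pose proof (H3 q y x). rewrite (H2 y x) in H. lra.
  - exists 1. split; [lra|]. intros y _ [q' [Hq' _]]. discriminate.
Qed.

Lemma inv_small (e : R) : 0 < e -> exists m : nat, 0 < / INR m /\ / INR m < e.
Proof.
  intros He. destruct (archimed_cor1 e He) as [N [HN HN0]].
  exists N. split; auto. apply Rinv_0_lt_compat. apply lt_0_INR. exact HN0.
Qed.

Lemma open_fsigma (X:Type) (d : X -> X -> R) (Hd : is_metric d) (U : X -> Prop) :
  metric_open d U ->
  (forall x, U x <-> exists m:nat, forall y, d x y < / INR (S m) -> U y) /\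
  (forall m:nat, metric_open d (compl (fun x => forall y, d x y < / INR (S m) -> U y))).
Proof.
  destruct Hd as [H0 [H1 [H2 H3]]]. intro HU. split.
  - intro x. split.
    + intro Ux. destruct (HU x Ux) as [r [rp Hr]].
      destruct (archimed_cor1 r rp) as [N [HN HN0]].
      exists N. intros y Hy. apply Hr.
      assert (/ INR (S N) < / INR N).
      { apply Rinv_lt_contravar. apply Rmult_lt_0_compat; apply lt_0_INR; lia.
        apply lt_INR. lia. }
      lra.
    + intros [m Hm]. apply Hm. rewrite (proj2 (H1 x x) eq_refl).
      apply Rinv_0_lt_compat. apply lt_0_INR. lia.
  - intros m x Hx. unfold compl in Hx.
    apply not_all_ex_not in Hx. destruct Hx as [y Hy].
    apply imply_to_and in Hy. destruct Hy as [Hxy Uy].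
    exists (/ INR (S m) - d x y). split; [lra|].
    intros z Hz Hcon. apply Uy. apply Hcon.
    pose proof (H3 z x y). rewrite (H2 z x) in H. lra.
Qed.

Lemma osub_nz : forall x y, osub x y -> y <> OZ.
Proof. intros x y H; induction H; discriminate || assumption. Qed.

Lemma sigma_step_ne (X:Type) opn (b:Ord) (Q : (X->Prop)->Prop) (A : X->Prop) :
  b <> OZ -> sigma_step opn b Q A = cunion Q A.
Proof. intros H; destruct b; [contradiction|reflexivity|reflexivity]. Qed.

Lemma closed_Pi (X:Type) opn (d : X -> X -> R) (Hopn : forall U, opn U <-> metric_open d U) :
  forall a, ord_wf a -> a <> OZ -> forall G, metric_open d (compl G) -> PiBelow opn a G.
Proof.
  intros a Ha. induction Ha as [|a Ha IH|f Hf IH Hinc]; intros Hnz G HG.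
  - contradiction.
  - simpl. destruct (classic (a = OZ)) as [->|Hne].
    + right. simpl. apply Hopn. exact HG.
    + left. apply IH; auto.
  - simpl. exists 1%nat. apply IH; auto. exact (osub_nz (Hinc 0%nat)).
Qed.

Lemma open_cunion (X:Type) opn (d : X -> X -> R) (Hd : is_metric d)
  (Hopn : forall U, opn U <-> metric_open d U) :
  forall b, ord_wf b -> b <> OZ -> forall U, metric_open d U -> cunion (PiBelow opn b) U.
Proof.
  intros b Hb Hnz U HU. destruct (open_fsigma Hd HU) as [E C].
  exists (fun m x => forall y, d x y < / INR (S m) -> U y). split; auto.
  intro m. eapply closed_Pi; eauto.
Qed.

Lemma inter_closed (X:Type) opn (d : X -> X -> R) (Hd : is_metric d)
  (Hopn : forall U, opn U <-> metric_open d U) :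
  forall a, ord_wf a -> forall G P, metric_open d (compl G) -> PiBelow opn a P ->
    PiBelow opn a (fun x => G x /\ P x).
Proof.
  intros a Ha. induction Ha as [|a Ha IH|f Hf IH Hinc]; intros G P HG HP.
  - simpl in HP. contradiction.
  - simpl in HP |- *. destruct HP as [HP|HP]; [left; auto|right].
    destruct (classic (a = OZ)) as [->|Hne].
    + simpl in HP |- *. apply Hopn in HP. apply Hopn.
      apply mo_ext with (A := fun x => compl G x \/ compl P x).
      * apply mo_or; auto.
      * intro x. unfold compl. split; [intros [H|H] [H1 H2]; auto|].
        intro H. apply not_and_or in H. exact H.
    + rewrite sigma_step_ne in HP |- * by exact Hne.
      apply cunion_ext with (A := fun x => compl G x \/ compl P x).
      * apply cunion_or; auto. eapply open_cunion; eauto.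
      * intro x. unfold compl. split; [intros [H|H] [H1 H2]; auto|].
        intro H. apply not_and_or in H. exact H.
  - simpl in HP |- *. destruct HP as [n Hn]. exists n. apply IH; auto.
Qed.

Definition Kb (X:Type) (d:X->X->R) (g : nat -> option X) (n:nat) : X -> Prop :=
  fun y => exists q, g (fst (pr n)) = Some q /\ d q y <= / INR (snd (pr n)).
Definition KA (X:Type) (d:X->X->R) (g : nat -> option X) (n:nat) (A : X->Prop) : X -> Prop :=
  fun y => Kb d g n y /\ A y.
Definition hullp (X:Type) opn (d:X->X->R) (g : nat -> option X) (psi : (X->Prop)->X->Prop)
  (A:X->Prop) : X -> Prop :=
  fun x => forall n, meager opn (KA d g n A) -> ~ Kb d g n x \/ psi (KA d g n A) x.
Definition Eset (X:Type) opn (d:X->X->R) (g : nat -> option X) (psi : (X->Prop)->X->Prop)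
  (A:X->Prop) (n:nat) : X -> Prop :=
  fun x => meager opn (KA d g n A) /\ Kb d g n x /\ ~ psi (KA d g n A) x.

Lemma Kb_closed (X:Type) (d:X->X->R) (Hd : is_metric d) g n : metric_open d (compl (Kb d g n)).
Proof. unfold Kb. apply ball_closed; auto. Qed.

Lemma compl_hullp (X:Type) opn (d:X->X->R) g psi (A : X -> Prop) :
  forall x, compl (hullp opn d g psi A) x <-> exists n, Eset opn d g psi A n x.
Proof.
  intro x. unfold compl, hullp, Eset. split.
  - intro H. apply not_all_ex_not in H. destruct H as [n Hn]. exists n.
    apply imply_to_and in Hn. destruct Hn as [Hm Hn]. apply not_or_and in Hn.
    destruct Hn as [H1 H2]. split; [exact Hm|split; [apply NNPP; exact H1|exact H2]].
  - intros [n [Hm [HK Hp]]] H. destruct (H n Hm) as [H'|H']; auto.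
Qed.

Lemma hull_common (X:Type) opn (d:X->X->R) (Hd : is_metric d)
  (Hopn : forall U, opn U <-> metric_open d U) (g : nat -> option X)
  (Hg : forall x eps, 0 < eps -> exists i q, g i = Some q /\ d x q < eps)
  K0 psi (Hpsi : monotone_hull opn (meager opn) K0 psi) :
  (forall A, baire_prop opn A ->
     borel opn (hullp opn d g psi A) /\ (forall x, A x -> hullp opn d g psi A x) /\
     meager opn (fun x => hullp opn d g psi A x /\ ~ A x)) /\
  (forall A1 A2, baire_prop opn A1 -> baire_prop opn A2 -> (forall x, A1 x -> A2 x) ->
     forall x, hullp opn d g psi A1 x -> hullp opn d g psi A2 x).
Proof.
  destruct Hpsi as [Hh Hmon]. split.
  - intros A HA. split; [|split].
    +
      apply borel_ext with (A := compl (fun x => exists n, Eset opn d g psi A n x)).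
      * apply borel_compl. apply borel_union. intro n.
        destruct (classic (meager opn (KA d g n A))) as [Hm|Hm].
        -- apply borel_ext with (A := compl (fun x => exists k,
                (match k with O => compl (Kb d g n) | S _ => psi (KA d g n A) end) x)).
           ++ apply borel_compl. apply borel_union. intros [|k].
              ** apply borel_open. apply Hopn. apply Kb_closed; auto.
              ** apply (proj1 (Hh _ Hm)).
           ++ intro x. unfold compl, Eset. split.
              ** intro H. split; [exact Hm|]. split.
                 --- apply NNPP. intro H'. apply H. exists O. exact H'.
                 --- intro H'. apply H. exists 1%nat. exact H'.
              ** intros [_ [H1 H2]] [[|k] Hk]; auto.
        -- apply borel_ext with (A := compl (fun _ : X => True)).
           ++ apply borel_compl. apply borel_open. apply Hopn. apply mo_True.
           ++ intro x. unfold compl, Eset. split; [intro H; exfalso; auto|].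
              intros [H _]; contradiction.
      * intro x. split.
        -- intro H. apply NNPP. intro H'. apply H. apply compl_hullp. exact H'.
        -- intros H H'. apply compl_hullp in H'. auto.
    +
      intros x Ax n Hm. destruct (classic (Kb d g n x)) as [HK|HK]; [right|left; exact HK].
      apply (proj1 (proj2 (proj2 (Hh _ Hm)))). split; auto.
    +
      destruct HA as [U [HU HAU]].
      pose proof Hd as [H0 [H1 [H2 H3]]].
      set (Wp := fun x => exists r, 0 < r /\ forall y, d x y < r -> ~ U y).
      set (N := fun x => ~ U x /\ ~ Wp x).
      set (Mn := fun n x => meager opn (KA d g n A) /\ psi (KA d g n A) x /\ ~ KA d g n A x).
      set (AU := fun x => (A x /\ ~ U x) \/ (U x /\ ~ A x)).
      apply (@meager_cunion X opn _ (fun k => match k with O => AU | 1%nat => N | S (S n) => Mn n end)).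
      * intros [|[|n]].
        -- exact HAU.
        -- exists (fun _ => N). split; [|intros x Hx; exists O; exact Hx].
           intros _ V HV Hcl x Vx.
           assert (HVU : forall y, V y -> ~ U y).
           { intros y Vy Uy. destruct (Hcl y Vy (fun z => V z /\ U z)) as [z [[Vz Uz] [Nz _]]].
             - apply Hopn. apply mo_and; apply Hopn; auto.
             - split; auto.
             - contradiction. }
           destruct (Hcl x Vx V HV Vx) as [z [Vz [_ Wz]]].
           apply Wz. apply Hopn in HV. destruct (HV z Vz) as [r [rp Hr]].
           exists r. split; auto.
        -- destruct (classic (meager opn (KA d g n A))) as [Hm|Hm].
           ++ apply meager_sub with (B := fun x => psi (KA d g n A) x /\ ~ KA d g n A x).
              ** apply (proj2 (proj2 (proj2 (Hh _ Hm)))).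
              ** intros x [_ Hx]. exact Hx.
           ++ apply meager_sub with (B := AU); auto.
              intros x [Hx _]. contradiction.
      * intros x [Hx nAx].
        destruct (classic (U x)) as [Ux|nUx].
        { exists O. right. auto. }
        destruct (classic (Wp x)) as [[r [rp Hr]]|nW].
        2:{ exists 1%nat. split; auto. }
        assert (r2 : 0 < r/2) by lra. destruct (inv_small r2) as [m [mp Hm]].
        destruct (Hg x (/ INR m) mp) as [i [q [Hgi Hxq]]].
        destruct (pr_surj i m) as [n Hn].
        assert (HKx : Kb d g n x).
        { exists q. rewrite Hn. simpl. split; auto. rewrite H2. lra. }
        assert (HKU : forall z, Kb d g n z -> ~ U z).
        { intros z [q' [Hq' Hz]]. rewrite Hn in Hq', Hz. simpl in Hq', Hz.
          rewrite Hgi in Hq'. injection Hq' as <-. apply Hr.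
          pose proof (H3 x q z). lra. }
        assert (HmK : meager opn (KA d g n A)).
        { apply meager_sub with (B := AU); auto. intros z [Kz Az]. left. split; auto. }
        exists (S (S n)). simpl. split; auto.
        destruct (Hx n HmK) as [H|H]; [contradiction|].
        split; auto. intros [_ Ax]. contradiction.
  - intros A1 A2 HA1 HA2 Hsub x Hx n Hm2.
    assert (Hm1 : meager opn (KA d g n A1)).
    { apply meager_sub with (B := KA d g n A2); auto. intros y [Ky Ay]. split; auto. }
    destruct (Hx n Hm1) as [H|H]; [left; exact H|right].
    apply (Hmon (KA d g n A1)); auto. intros y [Ky Ay]. split; auto.
Qed.

Lemma sigma0_cunion (X:Type) opn (a:Ord) (A : X -> Prop) :
  a <> OZ -> Sigma0 opn a A = cunion (PiBelow opn a) A.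
Proof. intro H. unfold Sigma0. apply sigma_step_ne; auto. Qed.

Theorem corollary3p3 (X : Type) (opn : (X -> Prop) -> Prop) (HX : polish opn)
  (a : Ord) (Ha : ord_wf a) (Ha2 : a <> OZ) :
  ((exists psi, monotone_hull opn (meager opn) (Sigma0 opn a) psi) ->
   exists psi, monotone_hull opn (baire_prop opn) (Pi0 opn (OS a)) psi)
  /\
  ((exists psi, monotone_hull opn (meager opn) (Pi0 opn a) psi) ->
   exists psi, monotone_hull opn (baire_prop opn) (Pi0 opn a) psi).
Proof.
  destruct HX as [d [Hd [_ [[S [[g Hgc] Hdense]] Hopn]]]].
  assert (Hg : forall x eps, 0 < eps -> exists i q, g i = Some q /\ d x q < eps).
  { intros x eps He. destruct (Hdense x eps He) as [y [Sy Hy]].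
    destruct (Hgc y Sy) as [i Hi]. exists i, y. auto. }
  split.
  - intros [psi Hpsi].
    destruct (hull_common Hd Hopn g Hg Hpsi) as [Hc Hm].
    exists (hullp opn d g psi). split; [|exact Hm].
    intros A HA. destruct (Hc A HA) as [Hb [Hin Hmg]].
    split; [exact Hb|]. split; [|split; assumption].
    unfold Pi0, Sigma0. simpl.
    exists (Eset opn d g psi A). split; [apply compl_hullp|].
    intro n. simpl. right. rewrite sigma_step_ne by exact Ha2.
    destruct (classic (meager opn (KA d g n A))) as [Hmk|Hmk].
    + apply cunion_ext with (A := fun x => compl (Kb d g n) x \/ psi (KA d g n A) x).
      * apply cunion_or.
        -- eapply open_cunion; eauto. apply Kb_closed; auto.
        -- rewrite <- sigma0_cunion by exact Ha2. apply (proj1 (proj2 (proj1 Hpsi _ Hmk))).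
      * intro x. unfold compl, Eset. split.
        -- intros [H|H] [_ [H1 H2]]; auto.
        -- intro H. apply not_and_or in H. destruct H as [H|H]; [contradiction|].
           apply not_and_or in H. destruct H as [H|H]; [left; exact H|right; apply NNPP; exact H].
    + apply cunion_ext with (A := fun _ : X => True).
      * eapply open_cunion; eauto. apply mo_True.
      * intro x. unfold compl, Eset. split; auto. intros _ [H _]. contradiction.
  - intros [psi Hpsi].
    destruct (hull_common Hd Hopn g Hg Hpsi) as [Hc Hm].
    exists (hullp opn d g psi). split; [|exact Hm].
    intros A HA. destruct (Hc A HA) as [Hb [Hin Hmg]].
    split; [exact Hb|]. split; [|split; assumption].
    unfold Pi0. rewrite sigma0_cunion by exact Ha2.
    apply (@cunion_flat X _ _ (Eset opn d g psi A)); [apply compl_hullp|].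
    intro n.
    destruct (classic (meager opn (KA d g n A))) as [Hmk|Hmk].
    + pose proof (proj1 (proj2 (proj1 Hpsi _ Hmk))) as HP.
      unfold Pi0 in HP. rewrite sigma0_cunion in HP by exact Ha2.
      destruct HP as [F [HF HFP]].
      exists (fun k x => Kb d g n x /\ F k x). split.
      * intro x. unfold Eset. split.
        -- intros [_ [HK Hp]]. destruct (proj1 (HF x) Hp) as [k Hk]. exists k. auto.
        -- intros [k [HK Hk]]. split; [exact Hmk|split; [exact HK|]].
           apply (proj2 (HF x)). exists k. exact Hk.
      * intro k. eapply inter_closed; eauto. apply Kb_closed; auto.
    + exists (fun _ _ => False). split.
      * intro x. unfold Eset. split; [intros [H _]; contradiction|intros [_ []]].
      * intro k. eapply closed_Pi; eauto.
        apply mo_ext with (A := fun _ : X => True); [apply mo_True|].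
        intro x. unfold compl. tauto.
Qed.
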